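(* Let $n \ge 1$ and let $p_0, p_1, \ldots, p_n \in \mathbb{Z}^2$ be integer points with $p_n = p_0$, forming the closed polygon $P = (p_0, p_1, \ldots, p_n)$ (not necessarily simple). Then $$\mathrm{Area}(P) = \sum_{q \in \mathbb{Z}^2} \mathrm{Ang}(P - q).$$
   Context: For $u = (u_1,u_2), v = (v_1,v_2) \in \mathbb{R}^2$ define $\mathrm{area}(u,v) := \tfrac12 (u_1 - v_1)(u_2 + v_2)$, and for a polygon $P = (p_0, \ldots, p_n)$ define $\mathrm{Area}(P) := \sum_{i=1}^n \mathrm{area}(p_{i-1}, p_i)$. The euclidean angle measure $\mathrm{ang} \colon \mathbb{R}^2 \times \mathbb{R}^2 \to (-\tfrac12, \tfrac12)$ is defined as follows: if $|u|\,|v| + u \cdot v > 0$ (so $u, v \ne 0$ and $v \notin u\,\mathbb{R}_{<0}$), let $\theta \in (-\pi, \pi)$ be the unique real number with $\frac{v}{|v|} = \begin{pmatrix} \cos\theta & -\sin\theta \\ \sin\theta & \cos\theta \end{pmatrix} \frac{u}{|u|}$ and set $\mathrm{ang}(u,v) := \theta / (2\pi)$; if $|u|\,|v| + u \cdot v = 0$, set $\mathrm{ang}(u,v) := 0$. For a polygon $P = (p_0, \ldots, p_n)$ define $\mathrm{Ang}(P) := \sum_{i=1}^n \mathrm{ang}(p_{i-1}, p_i)$, and for $q \in \mathbb{R}^2$ let $P - q := (p_0 - q, p_1 - q, \ldots, p_n - q)$. (For a closed polygon only finitely many $q \in \mathbb{Z}^2$ have $\mathrm{Ang}(P-q) \neq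 0$, so the sum is a finite sum.) *)

(* Defs.v *)
From Stdlib Require Import Reals List ZArith ClassicalEpsilon.
Open Scope R_scope.

Definition pt := (R * R)%type.

Definition dot (u v : pt) : R := fst u * fst v + snd u * snd v.
Definition norm (u : pt) : R := sqrt (fst u ^ 2 + snd u ^ 2).

Definition area (u v : pt) : R := / 2 * (fst u - fst v) * (snd u + snd v).

Definition rot_angle (u v : pt) (th : R) : Prop :=
  - PI < th < PI /\
  fst v / norm v = cos th * (fst u / norm u) - sin th * (snd u / norm u) /\
  snd v / norm v = sin th * (fst u / norm u) + cos th * (snd u / norm u).

(* the (unique, when |u||v| + u.v > 0) such theta, chosen by Hilbert epsilon *)
Definition theta (u v : pt) : R := epsilon (inhabits 0) (rot_angle u v).

Definition ang (u v : pt) : R :=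
  if Rlt_dec 0 (norm u * norm v + dot u v)
  then theta u v / (2 * PI)
  else 0.

Definition ipt := (Z * Z)%type.
Definition toR (p : ipt) : pt := (IZR (fst p), IZR (snd p)).
Definition subq (p q : ipt) : pt := (IZR (fst p) - IZR (fst q), IZR (snd p) - IZR (snd q)).

Definition sumR (l : list R) : R := fold_right Rplus 0 l.

(* polygon P = (p 0, ..., p n) given by p : nat -> ipt *)
Definition Area (p : nat -> ipt) (n : nat) : R :=
  sumR (map (fun i => area (toR (p (i - 1)%nat)) (toR (p i))) (seq 1 n)).

Definition Ang_shift (p : nat -> ipt) (n : nat) (q : ipt) : R :=
  sumR (map (fun i => ang (subq (p (i - 1)%nat) q) (subq (p i) q)) (seq 1 n)).

(* Main.v *)
Require Import Defs.
From Stdlib Require Import Reals List ZArith.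
From Stdlib Require Import Lia Lra Permutation ClassicalEpsilon.
Open Scope R_scope.

Definition cr (u v : pt) : R := fst u * snd v - snd u * fst v.
Definition rep (x y : pt) (a : R) : Prop :=
  0 < norm x /\ 0 < norm y /\ cos a * (norm x * norm y) = dot x y /\
  sin a * (norm x * norm y) = cr x y.

Ltac posneq := apply Rgt_not_eq; repeat apply Rmult_lt_0_compat; lra.

Lemma mul_pos_inv a n1 n2 : 0 < n1 -> 0 < n2 -> 0 < a * (n1 * n2) -> 0 < a.
Proof.
  intros h1 h2 h. assert (0 < n1 * n2) by (apply Rmult_lt_0_compat; lra).
  destruct (Rlt_dec 0 a) as [p|p]; auto. exfalso.
  assert (a * (n1*n2) <= 0). { replace (a*(n1*n2)) with (-((-a)*(n1*n2))) by ring.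
    assert (0 <= (-a)*(n1*n2)) by (apply Rmult_le_pos; lra). lra. } lra.
Qed.

Lemma mul_zero_inv a n1 n2 : 0 < n1 -> 0 < n2 -> a * (n1 * n2) = 0 -> a = 0.
Proof.
  intros h1 h2 h. assert (0 < n1 * n2) by (apply Rmult_lt_0_compat; lra).
  apply Rmult_integral in h. destruct h; lra.
Qed.

Lemma norm_sq x : norm x * norm x = fst x ^ 2 + snd x ^ 2.
Proof. unfold norm. apply sqrt_sqrt. nra. Qed.

Lemma norm_ge0 x : 0 <= norm x.
Proof. unfold norm. apply sqrt_pos. Qed.

Lemma norm_pos x : 0 < norm x \/ (fst x = 0 /\ snd x = 0).
Proof.
  destruct (Rlt_dec 0 (norm x)) as [h|h]; [left; exact h|right].
  assert (norm x = 0) by (pose proof (norm_ge0 x); lra).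
  pose proof (norm_sq x). rewrite H in H0.
  assert (fst x ^2 = 0) by (pose proof (pow2_ge_0 (fst x)); pose proof (pow2_ge_0 (snd x)); lra).
  assert (snd x ^2 = 0) by (pose proof (pow2_ge_0 (fst x)); pose proof (pow2_ge_0 (snd x)); lra).
  split; nra.
Qed.

Lemma lagrange x y : dot x y ^ 2 + cr x y ^ 2 = (norm x * norm x) * (norm y * norm y).
Proof. rewrite !norm_sq. unfold dot, cr. ring. Qed.

Lemma cos_gt_m1 a : - PI < a < PI -> -1 < cos a.
Proof.
  intros [h1 h2].
  replace a with (2 * (a/2)) by field.
  rewrite cos_2a_cos.
  assert (0 < cos (a/2)) by (apply cos_gt_0; lra).
  nra.
Qed.

Lemma cos1_zero s : cos s = 1 -> -(2*PI) < s < 2*PI -> s = 0.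
Proof.
  intros h [h1 h2].
  replace s with (2 * (s/2)) in h by field.
  rewrite cos_2a_sin in h.
  assert (sin (s/2) = 0) by nra.
  destruct (Rtotal_order (s/2) 0) as [l|[e|g]].
  - pose proof (sin_lt_0_var (s/2)). lra.
  - lra.
  - pose proof (sin_gt_0 (s/2)). lra.
Qed.

Lemma angle_eq a b : - PI < a < PI -> - PI < b < PI -> cos a = cos b -> sin a = sin b -> a = b.
Proof.
  intros ha hb hc hs.
  assert (cos (a - b) = 1).
  { rewrite cos_minus, hc, hs. pose proof (sin2_cos2 b). unfold Rsqr in H. lra. }
  apply cos1_zero in H; lra.
Qed.

Lemma sq_le1 c : c^2 <= 1 -> -1 <= c <= 1.
Proof. intros h. split; nra. Qed.

Lemma sq_lt1 c : c^2 < 1 -> -1 < c < 1.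
Proof. intros h. split; nra. Qed.

Lemma rep_exists x y : 0 < norm x -> 0 < norm y -> exists a, - PI < a <= PI /\ rep x y a.
Proof.
  intros hx hy.
  set (N := norm x * norm y).
  assert (hN : 0 < N) by (unfold N; nra).
  set (c := dot x y / N). set (s := cr x y / N).
  assert (hcs : c ^ 2 + s ^ 2 = 1).
  { unfold c, s. pose proof (lagrange x y).
    replace ((dot x y / N) ^ 2 + (cr x y / N) ^ 2) with ((dot x y ^2 + cr x y ^2) / (N*N)) by (field; lra).
    rewrite H. unfold N. field. lra. }
  assert (ec : dot x y = c * N) by (unfold c; field; lra).
  assert (es : cr x y = s * N) by (unfold s; field; lra).
  clearbody c s.
  assert (hc2 : c ^ 2 <= 1) by (pose proof (pow2_ge_0 s); lra).
  assert (hc : -1 <= c <= 1) by (apply sq_le1; exact hc2).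
  assert (hsq : sqrt (1 - c²) = Rabs s).
  { rewrite <- sqrt_Rsqr_abs. f_equal. unfold Rsqr. simpl in hcs. lra. }
  pose proof PI_RGT_0 as hpi.
  destruct (Rle_dec 0 s) as [s0|s0].
  - exists (acos c). pose proof (acos_bound c). split; [lra|].
    split; [exact hx|]. split; [exact hy|]. fold N.
    rewrite cos_acos by lra. rewrite sin_acos by lra. rewrite hsq, Rabs_right by lra. split; lra.
  - exists (- acos c).
    assert (-1 < c < 1).
    { apply sq_lt1. assert (0 < s^2) by (simpl; nra). lra. }
    pose proof (acos_bound_lt c H). split; [lra|].
    split; [exact hx|]. split; [exact hy|]. fold N.
    rewrite cos_neg, sin_neg, cos_acos by lra. rewrite sin_acos by lra. rewrite hsq, Rabs_left by lra. split; lra.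
Qed.

Lemma rot_rep x y t : 0 < norm x -> 0 < norm y -> rot_angle x y t ->
  cos t * (norm x * norm y) = dot x y /\ sin t * (norm x * norm y) = cr x y.
Proof.
  intros hx hy [_ [H1 H2]].
  set (nx := norm x) in *. set (ny := norm y) in *.
  assert (nsq : nx * nx = fst x ^2 + snd x ^2) by apply norm_sq.
  assert (H1' : fst y * nx = ny * (cos t * fst x - sin t * snd x)).
  { replace (fst y) with (fst y / ny * ny) by (field; lra). rewrite H1. field. lra. }
  assert (H2' : snd y * nx = ny * (sin t * fst x + cos t * snd x)).
  { replace (snd y) with (snd y / ny * ny) by (field; lra). rewrite H2. field. lra. }
  split.
  - apply (Rmult_eq_reg_r nx); [|lra]. unfold dot.
    transitivity (fst x * (fst y * nx) + snd x * (snd y * nx)); [|ring].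
    rewrite H1', H2'.
    replace (fst x * (ny * (cos t * fst x - sin t * snd x)) + snd x * (ny * (sin t * fst x + cos t * snd x)))
      with (cos t * ny * (fst x ^2 + snd x ^2)) by ring.
    rewrite <- nsq. ring.
  - apply (Rmult_eq_reg_r nx); [|lra]. unfold cr.
    transitivity (fst x * (snd y * nx) - snd x * (fst y * nx)); [|ring].
    rewrite H1', H2'.
    replace (fst x * (ny * (sin t * fst x + cos t * snd x)) - snd x * (ny * (cos t * fst x - sin t * snd x)))
      with (sin t * ny * (fst x ^2 + snd x ^2)) by ring.
    rewrite <- nsq. ring.
Qed.

Lemma rep_rot x y t : rep x y t -> - PI < t < PI -> rot_angle x y t.
Proof.
  intros [hx [hy [hc hs]]] ht.
  set (nx := norm x) in *. set (ny := norm y) in *.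
  assert (nsq : nx * nx = fst x ^2 + snd x ^2) by apply norm_sq.
  split; [exact ht|]. split.
  - apply (Rmult_eq_reg_r (nx * nx * ny)); [|posneq].
    change (norm x) with nx; change (norm y) with ny.
    replace ((cos t * (fst x / nx) - sin t * (snd x / nx)) * (nx * nx * ny))
      with (fst x * (cos t * (nx * ny)) - snd x * (sin t * (nx*ny))) by (field; lra).
    rewrite hc, hs. unfold dot, cr.
    replace (fst y / ny * (nx * nx * ny)) with (fst y * (nx * nx)) by (field; lra).
    rewrite nsq. ring.
  - apply (Rmult_eq_reg_r (nx * nx * ny)); [|posneq].
    change (norm x) with nx; change (norm y) with ny.
    replace ((sin t * (fst x / nx) + cos t * (snd x / nx)) * (nx * nx * ny))
      with (fst x * (sin t * (nx * ny)) + snd x * (cos t * (nx*ny))) by (field; lra).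
    rewrite hc, hs. unfold dot, cr.
    replace (snd y / ny * (nx * nx * ny)) with (snd y * (nx * nx)) by (field; lra).
    rewrite nsq. ring.
Qed.

Lemma rep_ang x y t : rep x y t -> - PI < t < PI -> ang x y = t / (2 * PI).
Proof.
  intros hr ht.
  pose proof hr as [hx [hy [hc hs]]].
  unfold ang. destruct (Rlt_dec _ _) as [h|h].
  - unfold theta.
    pose proof (epsilon_spec (inhabits 0) (rot_angle x y) (ex_intro _ t (rep_rot x y t hr ht))) as H.
    set (th := epsilon _ _) in *.
    pose proof H as [hth _].
    destruct (rot_rep x y th hx hy H) as [c2 s2].
    assert (th = t).
    { apply angle_eq; auto.
      - apply (Rmult_eq_reg_r (norm x * norm y)); [lra|posneq].
      - apply (Rmult_eq_reg_r (norm x * norm y)); [lra|posneq]. }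
    rewrite H0. reflexivity.
  - exfalso. apply h. rewrite <- hc. pose proof (cos_gt_m1 t ht).
    assert (0 < norm x * norm y) by (apply Rmult_lt_0_compat; lra).
    clear -H H0. nra.
Qed.

Lemma ang_cond x y : 0 < norm x * norm y + dot x y ->
  exists a, - PI < a < PI /\ rep x y a /\ ang x y = a / (2*PI).
Proof.
  intros h.
  assert (hx : 0 < norm x).
  { destruct (norm_pos x) as [p|[e1 e2]]; auto. exfalso. unfold dot in h. rewrite e1, e2 in h.
    pose proof (norm_ge0 y). assert (norm x = 0). { unfold norm. rewrite e1, e2. replace (0^2+0^2) with 0 by ring. apply sqrt_0. }
    rewrite H0 in h. lra. }
  assert (hy : 0 < norm y).
  { destruct (norm_pos y) as [p|[e1 e2]]; auto. exfalso. unfold dot in h. rewrite e1, e2 in h.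
    assert (norm y = 0). { unfold norm. rewrite e1, e2. replace (0^2+0^2) with 0 by ring. apply sqrt_0. }
    rewrite H in h. lra. }
  destruct (rep_exists x y hx hy) as [a [ha hr]].
  assert (a <> PI).
  { intro e. subst a. destruct hr as [_ [_ [hc _]]]. rewrite cos_PI in hc. lra. }
  exists a. split; [lra|]. split; auto. apply rep_ang; auto. lra.
Qed.

Lemma ang_nocond x y : ~ (0 < norm x * norm y + dot x y) -> ang x y = 0.
Proof. intros h. unfold ang. destruct (Rlt_dec _ _); tauto. Qed.

Lemma rep_sym x y a : rep x y a -> rep y x (-a).
Proof.
  intros [hx [hy [hc hs]]]. split; auto. split; auto.
  rewrite cos_neg, sin_neg. unfold dot, cr in *. split; nra.
Qed.

Lemma ang_antisym x y : ang y x = - ang x y.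
Proof.
  destruct (Rlt_dec 0 (norm x * norm y + dot x y)) as [h|h].
  - destruct (ang_cond x y h) as [a [ha [hr he]]].
    rewrite he. rewrite (rep_ang y x (-a)); [field; pose proof PI_RGT_0; lra| apply rep_sym; auto | lra].
  - rewrite (ang_nocond x y h). rewrite ang_nocond; [lra|].
    unfold dot in *. intro; apply h. lra.
Qed.

Lemma ang_cr0 x y : cr x y = 0 -> ang x y = 0.
Proof.
  intros h.
  destruct (Rlt_dec 0 (norm x * norm y + dot x y)) as [c|c].
  - destruct (ang_cond x y c) as [a [ha [[hx [hy [hc hs]]] he]]].
    rewrite he. rewrite h in hs.
    assert (sin a = 0) by (apply (mul_zero_inv _ _ _ hx hy hs)).
    destruct (Rtotal_order a 0) as [l|[e|g]].
    + pose proof (sin_lt_0_var a). lra.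
    + subst; lra.
    + pose proof (sin_gt_0 a). lra.
  - apply ang_nocond; auto.
Qed.

Lemma ang_zero_l x y : fst x = 0 -> snd x = 0 -> ang x y = 0.
Proof. intros h1 h2. apply ang_cr0. unfold cr. rewrite h1, h2. ring. Qed.

Lemma ang_zero_r x y : fst y = 0 -> snd y = 0 -> ang x y = 0.
Proof. intros h1 h2. apply ang_cr0. unfold cr. rewrite h1, h2. ring. Qed.

Lemma rep_comp x y z a b : rep x y a -> rep y z b -> rep x z (a + b).
Proof.
  intros [hx [hy [hc hs]]] [_ [hz [hc' hs']]].
  split; auto. split; auto.
  assert (nsq : norm y * norm y = fst y ^2 + snd y ^2) by apply norm_sq.
  rewrite cos_plus, sin_plus. split.
  - apply (Rmult_eq_reg_r (norm y * norm y)); [|posneq].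
    transitivity ((cos a * (norm x * norm y)) * (cos b * (norm y * norm z)) - (sin a * (norm x * norm y)) * (sin b * (norm y * norm z))); [ring|].
    rewrite hc, hs, hc', hs', nsq. unfold dot, cr. ring.
  - apply (Rmult_eq_reg_r (norm y * norm y)); [|posneq].
    transitivity ((sin a * (norm x * norm y)) * (cos b * (norm y * norm z)) + (cos a * (norm x * norm y)) * (sin b * (norm y * norm z))); [ring|].
    rewrite hc, hs, hc', hs', nsq. unfold dot, cr. ring.
Qed.

Lemma norm_opp x x' : fst x' = - fst x -> snd x' = - snd x -> norm x' = norm x.
Proof. intros h1 h2. unfold norm. rewrite h1, h2. f_equal. ring. Qed.

Lemma rep_opp x y x' y' a : rep x y a -> fst x' = - fst x -> snd x' = - snd x ->
  fst y' = - fst y -> snd y' = - snd y -> rep x' y' a.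
Proof.
  intros [hx [hy [hc hs]]] h1 h2 h3 h4.
  rewrite <- (norm_opp x x') in hx, hc, hs by auto.
  rewrite <- (norm_opp y y') in hy, hc, hs by auto.
  split; auto. split; auto. unfold dot, cr in *. rewrite h1, h2, h3, h4. split; lra.
Qed.

Lemma cos_pos_range a : - PI < a <= PI -> 0 < cos a -> - (PI/2) < a < PI/2.
Proof.
  intros ha hc. split.
  - destruct (Rlt_dec (-(PI/2)) a); auto. exfalso.
    pose proof (cos_le_0 (-a)). rewrite cos_neg in H. lra.
  - destruct (Rlt_dec a (PI/2)); auto. exfalso.
    pose proof (cos_le_0 a). lra.
Qed.

Lemma hp3 d x y z : 0 < dot d x -> 0 < dot d y -> 0 < dot d z ->
  ang x y + ang y z + ang z x = 0.
Proof.
  intros hx hy hz.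
  assert (hd : 0 < norm d).
  { destruct (norm_pos d) as [p|[e1 e2]]; auto. unfold dot in hx. rewrite e1, e2 in hx. lra. }
  assert (phi : forall w, 0 < dot d w -> exists aw, - (PI/2) < aw < PI/2 /\ rep d w aw).
  { intros w hw.
    assert (0 < norm w).
    { destruct (norm_pos w) as [p|[e1 e2]]; auto. unfold dot in hw. rewrite e1, e2 in hw. lra. }
    destruct (rep_exists d w hd H) as [aw [ha hr]]. exists aw. split; auto.
    apply cos_pos_range; auto. destruct hr as [_ [_ [hc _]]].
    apply (mul_pos_inv _ (norm d) (norm w)); auto; lra. }
  assert (key : forall u v au av, - (PI/2) < au < PI/2 -> rep d u au ->
              - (PI/2) < av < PI/2 -> rep d v av -> ang u v = (av - au) / (2*PI)).
  { intros u v au av hau hu hav hv.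
    replace (av - au) with (- au + av) by ring.
    apply rep_ang; [|lra]. apply rep_comp with d; auto. apply rep_sym; auto. }
  destruct (phi x hx) as [ax [hax rx]].
  destruct (phi y hy) as [ay [hay ry]].
  destruct (phi z hz) as [az [haz rz]].
  rewrite (key x y ax ay), (key y z ay az), (key z x az ax); auto.
  field. pose proof PI_RGT_0. lra.
Qed.

Definition vsub (A B : pt) : pt := (fst A - fst B, snd A - snd B).

Lemma angle_sum A B C : 0 < cr (vsub B A) (vsub C A) ->
  ang (vsub B A) (vsub C A) + ang (vsub C B) (vsub A B) + ang (vsub A C) (vsub B C) = / 2.
Proof.
  intros h.
  assert (nz : forall u v, 0 < cr u v -> 0 < norm u /\ 0 < norm v).
  { intros u v huv. split.
    - destruct (norm_pos u) as [p|[e1 e2]]; auto. unfold cr in huv. rewrite e1, e2 in huv. lra.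
    - destruct (norm_pos v) as [p|[e1 e2]]; auto. unfold cr in huv. rewrite e1, e2 in huv. lra. }
  assert (get : forall u v, 0 < cr u v -> exists a, 0 < a < PI /\ rep u v a /\ ang u v = a / (2*PI)).
  { intros u v huv. destruct (nz u v huv) as [hu hv].
    destruct (rep_exists u v hu hv) as [a [ha hr]].
    assert (0 < a < PI).
    { pose proof hr as [_ [_ [_ hs]]].
      assert (0 < sin a) by (apply (mul_pos_inv _ (norm u) (norm v)); auto; lra).
      split.
      - destruct (Rtotal_order a 0) as [l|[e|g]]; auto.
        + pose proof (sin_lt_0_var a). lra.
        + subst. rewrite sin_0 in H. lra.
      - destruct (Rtotal_order a PI) as [l|[e|g]]; auto.
        + subst. rewrite sin_PI in H. lra.
        + lra. }
    exists a. split; auto. split; auto. apply rep_ang; auto. lra. }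
  assert (h2 : 0 < cr (vsub C B) (vsub A B)) by (unfold cr, vsub in *; simpl in *; nra).
  assert (h3 : 0 < cr (vsub A C) (vsub B C)) by (unfold cr, vsub in *; simpl in *; nra).
  destruct (get _ _ h) as [a [ha [ra ea]]].
  destruct (get _ _ h2) as [b [hb [rb eb]]].
  destruct (get _ _ h3) as [c [hc [rc ec]]].
  rewrite ea, eb, ec.
  assert (rc' : rep (vsub C A) (vsub C B) c).
  { apply rep_opp with (vsub A C) (vsub B C); auto; unfold vsub; simpl; ring. }
  pose proof (rep_comp _ _ _ _ _ (rep_comp _ _ _ _ _ ra rc') rb) as r.
  destruct r as [hx [hy [hcos _]]].
  rewrite (norm_opp (vsub B A) (vsub A B)) in hcos by (unfold vsub; simpl; ring).
  assert (cos (a + c + b) = -1).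
  { apply (Rmult_eq_reg_r (norm (vsub B A) * norm (vsub B A))); [|nra].
    rewrite hcos, norm_sq. unfold dot, vsub. simpl. ring. }
  assert (cos (a + c + b - PI) = 1).
  { rewrite cos_minus, H, cos_PI, sin_PI. ring. }
  apply cos1_zero in H0; [|pose proof PI_RGT_0; lra].
  replace (a/(2*PI) + b/(2*PI) + c/(2*PI)) with ((a+c+b)/(2*PI)) by (field; pose proof PI_RGT_0; lra).
  replace (a + c + b) with PI by lra. field. pose proof PI_RGT_0; lra.
Qed.

Definition AngT (a b c q : ipt) : R :=
  ang (subq a q) (subq b q) + ang (subq b q) (subq c q) + ang (subq c q) (subq a q).
Definition zD (a b c : ipt) : Z :=
  ((fst b - fst a) * (snd c - snd a) - (snd b - snd a) * (fst c - fst a))%Z.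

Ltac izr := repeat progress (rewrite ?minus_IZR, ?mult_IZR, ?plus_IZR, ?opp_IZR).
Ltac izr_in H := repeat progress (rewrite ?minus_IZR, ?mult_IZR, ?plus_IZR, ?opp_IZR in H).

Lemma cr_subq a b q : cr (subq a q) (subq b q) = IZR (zD q a b).
Proof. unfold cr, subq, zD; simpl. izr. ring. Qed.

Lemma AngT_cyc a b c q : AngT b c a q = AngT a b c q.
Proof. unfold AngT. ring. Qed.

Lemma zD_cyc a b c : zD b c a = zD a b c.
Proof. unfold zD. ring. Qed.

Lemma zD_swap a b c : zD a c b = (- zD a b c)%Z.
Proof. unfold zD. ring. Qed.

Lemma zD_sum q a b c : (zD q a b + zD q b c + zD q c a = zD a b c)%Z.
Proof. unfold zD. ring. Qed.

Lemma AngT_swap a b c q : AngT a c b q = - AngT a b c q.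
Proof.
  unfold AngT. rewrite (ang_antisym (subq a q) (subq c q)), (ang_antisym (subq c q) (subq b q)),
    (ang_antisym (subq b q) (subq a q)). ring.
Qed.

Lemma AngT_hp a b c q (d1 d2 : Z) :
  (0 < d1 * (fst a - fst q) + d2 * (snd a - snd q))%Z ->
  (0 < d1 * (fst b - fst q) + d2 * (snd b - snd q))%Z ->
  (0 < d1 * (fst c - fst q) + d2 * (snd c - snd q))%Z ->
  AngT a b c q = 0.
Proof.
  intros ha hb hc. unfold AngT.
  apply (hp3 (IZR d1, IZR d2)); unfold dot, subq; simpl.
  - apply IZR_lt in ha. izr_in ha. lra.
  - apply IZR_lt in hb. izr_in hb. lra.
  - apply IZR_lt in hc. izr_in hc. lra.
Qed.

Lemma AngT_Z0 a b c q :
  ((zD q a b < 0 /\ zD q a b < zD a b c) \/ (zD q a b > 0 /\ zD q a b > zD a b c))%Z ->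
  AngT a b c q = 0.
Proof.
  intros h.
  assert (e1 : ((snd a - snd b) * (fst a - fst q) + (fst b - fst a) * (snd a - snd q) = - zD q a b)%Z)
    by (unfold zD; ring).
  assert (e2 : ((snd a - snd b) * (fst b - fst q) + (fst b - fst a) * (snd b - snd q) = - zD q a b)%Z)
    by (unfold zD; ring).
  assert (e3 : ((snd a - snd b) * (fst c - fst q) + (fst b - fst a) * (snd c - snd q) = zD a b c - zD q a b)%Z)
    by (unfold zD; ring).
  destruct h as [[h1 h2]|[h1 h2]].
  - apply (AngT_hp a b c q (snd a - snd b) (fst b - fst a)); lia.
  - apply (AngT_hp a b c q (- (snd a - snd b)) (- (fst b - fst a))); lia.
Qed.

Lemma ang_subq_self_l a b : ang (subq a a) b = 0.
Proof. apply ang_zero_l; unfold subq; simpl; ring. Qed.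
Lemma ang_subq_self_r a b : ang b (subq a a) = 0.
Proof. apply ang_zero_r; unfold subq; simpl; ring. Qed.

Lemma AngT_degen a b c q : zD a b c = 0%Z -> AngT a b c q = 0.
Proof.
  intros h.
  destruct (Z.eq_dec (zD q a b) 0) as [k1|k1].
  2:{ apply AngT_Z0. lia. }
  destruct (Z.eq_dec (zD q b c) 0) as [k2|k2].
  2:{ rewrite <- AngT_cyc. apply AngT_Z0. rewrite (zD_cyc a b c). lia. }
  destruct (Z.eq_dec (zD q c a) 0) as [k3|k3].
  2:{ rewrite <- AngT_cyc, <- AngT_cyc. apply AngT_Z0. rewrite (zD_cyc b c a), (zD_cyc a b c). lia. }
  unfold AngT. rewrite !ang_cr0; [ring| | |]; rewrite cr_subq; [rewrite k3|rewrite k2|rewrite k1]; reflexivity.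
Qed.

Lemma cramer a b c q :
  (zD a b c * (fst q - fst a) = zD q c a * (fst b - fst a) + zD q a b * (fst c - fst a))%Z /\
  (zD a b c * (snd q - snd a) = zD q c a * (snd b - snd a) + zD q a b * (snd c - snd a))%Z.
Proof. unfold zD; split; ring. Qed.

Lemma pair_eq (x y : ipt) : fst x = fst y -> snd x = snd y -> x = y.
Proof. destruct x, y; simpl; intros; subst; auto. Qed.

Lemma AngT_unimod_out a b c q : zD a b c = 1%Z -> q <> a -> q <> b -> q <> c -> AngT a b c q = 0.
Proof.
  intros hD na nb nc.
  pose proof (zD_sum q a b c) as hs.
  destruct (Z_lt_le_dec (zD q a b) 0) as [k1|k1].
  { apply AngT_Z0. lia. }
  destruct (Z_lt_le_dec (zD q b c) 0) as [k2|k2].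
  { rewrite <- AngT_cyc. apply AngT_Z0. rewrite (zD_cyc a b c). lia. }
  destruct (Z_lt_le_dec (zD q c a) 0) as [k3|k3].
  { rewrite <- AngT_cyc, <- AngT_cyc. apply AngT_Z0. rewrite (zD_cyc b c a), (zD_cyc a b c). lia. }
  exfalso.
  destruct (cramer a b c q) as [c1 c2].
  destruct (cramer b c a q) as [c3 c4].
  destruct (cramer c a b q) as [c5 c6].
  rewrite (zD_cyc a b c) in c3, c4. rewrite (zD_cyc b c a), (zD_cyc a b c) in c5, c6.
  rewrite hD in c1, c2, c3, c4, c5, c6.
  rewrite !Z.mul_1_l in c1, c2, c3, c4, c5, c6.
  remember (zD q a b) as K1. remember (zD q b c) as K2. remember (zD q c a) as K3.
  assert ((K1 = 1 /\ K2 = 0 /\ K3 = 0) \/ (K1 = 0 /\ K2 = 1 /\ K3 = 0) \/ (K1 = 0 /\ K2 = 0 /\ K3 = 1))%Z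
    as H by lia.
  destruct H as [[e1 [e2 e3]]|[[e1 [e2 e3]]|[e1 [e2 e3]]]]; rewrite e1, e2, e3 in *.
  - apply nc. apply pair_eq; lia.
  - apply na. apply pair_eq; lia.
  - apply nb. apply pair_eq; lia.
Qed.

Lemma AngT_vertices a b c : (0 < zD a b c)%Z ->
  AngT a b c a + AngT a b c b + AngT a b c c = / 2.
Proof.
  intros h. unfold AngT.
  rewrite !ang_subq_self_l, !ang_subq_self_r.
  pose proof (angle_sum (toR a) (toR b) (toR c)) as H.
  change (vsub (toR b) (toR a)) with (subq b a) in H.
  change (vsub (toR c) (toR a)) with (subq c a) in H.
  change (vsub (toR c) (toR b)) with (subq c b) in H.
  change (vsub (toR a) (toR b)) with (subq a b) in H.
  change (vsub (toR a) (toR c)) with (subq a c) in H.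
  change (vsub (toR b) (toR c)) with (subq b c) in H.
  rewrite cr_subq in H. apply IZR_lt in h.
  rewrite <- H by exact h. ring.
Qed.

Lemma sumR_cons x l : sumR (x :: l) = x + sumR l.
Proof. reflexivity. Qed.

Lemma sumR_app l1 l2 : sumR (l1 ++ l2) = sumR l1 + sumR l2.
Proof. induction l1; simpl; [ring|]. unfold sumR in *. simpl. rewrite IHl1. ring. Qed.

Lemma sumR_map_plus {A} (f g : A -> R) l :
  sumR (map (fun x => f x + g x) l) = sumR (map f l) + sumR (map g l).
Proof. induction l; simpl; [unfold sumR; simpl; ring|]. unfold sumR in *; simpl. rewrite IHl. ring. Qed.

Lemma sumR_map_opp {A} (f : A -> R) l :
  sumR (map (fun x => - f x) l) = - sumR (map f l).
Proof. induction l; unfold sumR in *; simpl; [ring|]. rewrite IHl. ring. Qed.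

Lemma sumR_map_zero {A} (f : A -> R) l : (forall x, In x l -> f x = 0) -> sumR (map f l) = 0.
Proof.
  induction l; intros h; unfold sumR in *; simpl; [ring|].
  rewrite h by (left; auto). rewrite IHl; [ring|]. intros; apply h; right; auto.
Qed.

Lemma sumR_map_ext {A} (f g : A -> R) l : (forall x, In x l -> f x = g x) -> sumR (map f l) = sumR (map g l).
Proof. intros h. f_equal. apply map_ext_in. auto. Qed.

Lemma sumR_perm l l' : Permutation l l' -> sumR l = sumR l'.
Proof.
  induction 1; unfold sumR in *; simpl; auto.
  - rewrite IHPermutation. auto.
  - ring.
  - congruence.
Qed.

Lemma sumR_filter {A} (f : A -> R) (P : A -> bool) l :
  (forall x, In x l -> P x = false -> f x = 0) ->
  sumR (map f l) = sumR (map f (filter P l)).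
Proof.
  induction l; intros h; simpl; auto.
  destruct (P a) eqn:E; simpl; unfold sumR in *; simpl.
  - rewrite IHl; auto. intros; apply h; auto. right; auto.
  - rewrite h; [|left; auto|auto]. rewrite IHl; [ring|]. intros; apply h; auto. right; auto.
Qed.

Lemma sumR_swap {A B} (f : A -> B -> R) l1 l2 :
  sumR (map (fun x => sumR (map (fun y => f x y) l2)) l1) =
  sumR (map (fun y => sumR (map (fun x => f x y) l1)) l2).
Proof.
  induction l1; simpl.
  - symmetry. apply sumR_map_zero. intros. reflexivity.
  - unfold sumR at 1. simpl. fold (sumR (map (fun x => sumR (map (fun y => f x y) l2)) l1)).
    rewrite IHl1.
    rewrite <- (sumR_map_plus (fun y => f a y) (fun y => sumR (map (fun x => f x y) l1))).
    reflexivity.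
Qed.

Lemma sumR_telescope (h : nat -> R) n :
  sumR (map (fun i => h (i - 1)%nat - h i) (seq 1 n)) = h 0%nat - h n.
Proof.
  induction n.
  - simpl. unfold sumR; simpl. ring.
  - rewrite seq_S, map_app, sumR_app, IHn. simpl. unfold sumR; simpl.
    replace (n - 0)%nat with n by lia. ring.
Qed.

Definition ipt_eqb (x y : ipt) : bool := Z.eqb (fst x) (fst y) && Z.eqb (snd x) (snd y).
Lemma ipt_eqb_spec x y : ipt_eqb x y = true <-> x = y.
Proof.
  unfold ipt_eqb. rewrite Bool.andb_true_iff, !Z.eqb_eq. split.
  - intros [h1 h2]. apply pair_eq; auto.
  - intros ->. auto.
Qed.

Definition Zr (M : Z) : list Z := map (fun k => (Z.of_nat k - M)%Z) (seq 0 (Z.to_nat (2 * M + 1))).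
Definition Box (M : Z) : list ipt := list_prod (Zr M) (Zr M).
Definition inbox (M : Z) (q : ipt) : Prop := ((- M <= fst q <= M) /\ (- M <= snd q <= M))%Z.

Lemma In_Zr M z : (0 <= M)%Z -> (In z (Zr M) <-> (- M <= z <= M)%Z).
Proof.
  intros hM. unfold Zr. rewrite in_map_iff. split.
  - intros [k [e hk]]. apply in_seq in hk. subst z. lia.
  - intros hz. exists (Z.to_nat (z + M)). split; [lia|]. apply in_seq. lia.
Qed.

Lemma In_Box M q : (0 <= M)%Z -> (In q (Box M) <-> inbox M q).
Proof.
  intros hM. destruct q as [x y]. unfold Box, inbox. simpl. split.
  - intros H. apply in_prod_iff in H. rewrite !In_Zr in H by auto. tauto.
  - intros H. apply in_prod_iff. rewrite !In_Zr by auto. tauto.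
Qed.

Lemma NoDup_prod {A B} (l1 : list A) (l2 : list B) : NoDup l1 -> NoDup l2 -> NoDup (list_prod l1 l2).
Proof.
  induction 1 as [|x l nx nd IH]; intros h2; simpl; [constructor|].
  apply NoDup_app.
  - apply FinFun.Injective_map_NoDup; auto. intros y1 y2 e. inversion e; auto.
  - apply IH; auto.
  - intros [u v] hin hin2. apply in_map_iff in hin. destruct hin as [y [e _]]. inversion e; subst.
    apply in_prod_iff in hin2. tauto.
Qed.

Lemma NoDup_Box M : NoDup (Box M).
Proof.
  unfold Box. assert (NoDup (Zr M)).
  { unfold Zr. apply FinFun.Injective_map_NoDup; [|apply seq_NoDup]. intros x y e. lia. }
  apply NoDup_prod; auto.
Qed.

Section S3.
Local Open Scope Z_scope.

Lemma reduce_step u1 u2 v1 v2 x01 x02 :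
  0 < u1*v2 - u2*v1 ->
  ~ ((x01*v2 - x02*v1) mod (u1*v2 - u2*v1) = 0 /\ (u1*x02 - u2*x01) mod (u1*v2 - u2*v1) = 0) ->
  exists x1 x2, 0 <= x1*v2 - x2*v1 < u1*v2 - u2*v1 /\ 0 <= u1*x2 - u2*x1 < u1*v2 - u2*v1 /\
    (x1*v2 - x2*v1 <> 0 \/ u1*x2 - u2*x1 <> 0).
Proof.
  intros hD hn.
  set (D := u1*v2 - u2*v1) in *.
  set (a0 := x01*v2 - x02*v1) in *. set (b0 := u1*x02 - u2*x01) in *.
  set (k := a0 / D). set (l := b0 / D).
  exists (x01 - k*u1 - l*v1), (x02 - k*u2 - l*v2).
  assert (ea : (x01 - k*u1 - l*v1)*v2 - (x02 - k*u2 - l*v2)*v1 = a0 - k*D) by (unfold a0, D; ring).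
  assert (eb : u1*(x02 - k*u2 - l*v2) - u2*(x01 - k*u1 - l*v1) = b0 - l*D) by (unfold b0, D; ring).
  rewrite ea, eb.
  pose proof (Z.div_mod a0 D ltac:(lia)) as ha. pose proof (Z.div_mod b0 D ltac:(lia)) as hb.
  pose proof (Z.mod_pos_bound a0 D hD). pose proof (Z.mod_pos_bound b0 D hD).
  try fold k in ha; try fold l in hb.
  assert (a0 - k*D = a0 mod D) by lia. assert (b0 - l*D = b0 mod D) by lia.
  rewrite H1, H2. split; [lia|]. split; [lia|].
  destruct (Z.eq_dec (a0 mod D) 0); [right|left]; auto.
Qed.

Lemma step1 u1 u2 v1 v2 : 2 <= u1*v2 - u2*v1 ->
  exists x1 x2, 0 <= x1*v2 - x2*v1 < u1*v2 - u2*v1 /\ 0 <= u1*x2 - u2*x1 < u1*v2 - u2*v1 /\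
    (x1*v2 - x2*v1 <> 0 \/ u1*x2 - u2*x1 <> 0).
Proof.
  intros hD.
  destruct (Z.eq_dec ((1*v2 - 0*v1) mod (u1*v2 - u2*v1)) 0) as [e1|e1];
  [destruct (Z.eq_dec ((u1*0 - u2*1) mod (u1*v2 - u2*v1)) 0) as [e2|e2]|];
  [| apply reduce_step with 1 0; [lia|tauto] | apply reduce_step with 1 0; [lia|tauto]].
  destruct (Z.eq_dec ((0*v2 - 1*v1) mod (u1*v2 - u2*v1)) 0) as [e3|e3];
  [destruct (Z.eq_dec ((u1*1 - u2*0) mod (u1*v2 - u2*v1)) 0) as [e4|e4]|];
  [| apply reduce_step with 0 1; [lia|tauto] | apply reduce_step with 0 1; [lia|tauto]].
  exfalso.
  set (D := u1*v2 - u2*v1) in *.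
  assert (HD : D = u1*v2 - u2*v1) by reflexivity. clearbody D.
  apply Z.mod_divide in e1, e2, e3, e4; try lia.
  destruct e1 as [k1 h1], e2 as [k2 h2], e3 as [k3 h3], e4 as [k4 h4].
  assert (v2 = k1 * D) by lia. assert (u2 = - (k2 * D)) by lia.
  assert (v1 = - (k3 * D)) by lia. assert (u1 = k4 * D) by lia.
  assert (D = D * D * (k4 * k1 - k2 * k3)).
  { rewrite HD at 1. rewrite H, H0, H1, H2. ring. }
  clear - H3 hD. set (s := k4 * k1 - k2 * k3) in *. clearbody s.
  assert (E : D * 1 = D * (D * s)) by (rewrite Z.mul_assoc; lia).
  apply Z.mul_cancel_l in E; [|lia].
  destruct (Z_le_gt_dec s 0).
  - assert (D * s <= 0) by (apply Z.mul_nonneg_nonpos; lia). lia.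
  - assert (D * 1 <= D * s) by (apply Z.mul_le_mono_nonneg_l; lia). lia.
Qed.

Lemma find_e a b c : 2 <= zD a b c ->
  exists e, 0 <= zD e a b < zD a b c /\ 0 <= zD e b c < zD a b c /\ 0 <= zD e c a < zD a b c.
Proof.
  intros hD.
  destruct a as [a1 a2], b as [b1 b2], c as [c1 c2].
  unfold zD in *; simpl in *.
  destruct (step1 (b1 - a1) (b2 - a2) (c1 - a1) (c2 - a2) hD) as [x1 [x2 [ha [hb hn]]]].
  set (D := (b1 - a1) * (c2 - a2) - (b2 - a2) * (c1 - a1)) in *.
  set (al := x1 * (c2 - a2) - x2 * (c1 - a1)) in *.
  set (be := (b1 - a1) * x2 - (b2 - a2) * x1) in *.
  destruct (Z_le_gt_dec (al + be) D).
  - exists (a1 + x1, a2 + x2). simpl.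
    assert (E1 : (a1 - (a1 + x1)) * (b2 - (a2 + x2)) - (a2 - (a2 + x2)) * (b1 - (a1 + x1)) = be) by (unfold be; ring).
    assert (E2 : (b1 - (a1 + x1)) * (c2 - (a2 + x2)) - (b2 - (a2 + x2)) * (c1 - (a1 + x1)) = D - al - be) by (unfold D, al, be; ring).
    assert (E3 : (c1 - (a1 + x1)) * (a2 - (a2 + x2)) - (c2 - (a2 + x2)) * (a1 - (a1 + x1)) = al) by (unfold al; ring).
    rewrite E1, E2, E3. lia.
  - set (y1 := (b1 - a1) + (c1 - a1) - x1). set (y2 := (b2 - a2) + (c2 - a2) - x2).
    exists (a1 + y1, a2 + y2). simpl.
    assert (E1 : (a1 - (a1 + y1)) * (b2 - (a2 + y2)) - (a2 - (a2 + y2)) * (b1 - (a1 + y1)) = D - be) by (unfold y1, y2, be, D; ring).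
    assert (E2 : (b1 - (a1 + y1)) * (c2 - (a2 + y2)) - (b2 - (a2 + y2)) * (c1 - (a1 + y1)) = al + be - D) by (unfold y1, y2, D, al, be; ring).
    assert (E3 : (c1 - (a1 + y1)) * (a2 - (a2 + y2)) - (c2 - (a2 + y2)) * (a1 - (a1 + y1)) = D - al) by (unfold y1, y2, al, D; ring).
    rewrite E1, E2, E3. lia.
Qed.

Lemma bary a b c e :
  zD a b c * fst e = zD e b c * fst a + zD e c a * fst b + zD e a b * fst c /\
  zD a b c * snd e = zD e b c * snd a + zD e c a * snd b + zD e a b * snd c.
Proof. unfold zD; split; ring. Qed.

Lemma e_inbox M a b c e : inbox M a -> inbox M b -> inbox M c ->
  0 < zD a b c -> 0 <= zD e b c -> 0 <= zD e c a -> 0 <= zD e a b -> inbox M e.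
Proof.
  intros ha hb hc hD h1 h2 h3.
  pose proof (zD_sum e a b c) as hs.
  destruct (bary a b c e) as [b1 b2].
  unfold inbox in *.
  remember (zD a b c) as D. remember (zD e b c) as K1. remember (zD e c a) as K2. remember (zD e a b) as K3.
  clear HeqD HeqK1 HeqK2 HeqK3.
  destruct a as [a1 a2], b as [x1 x2], c as [c1 c2], e as [e1 e2]; simpl in *.
  split; split; nia.
Qed.

End S3.

Lemma AngT_split e a b c q : AngT a b c q = AngT e a b q + AngT e b c q + AngT e c a q.
Proof.
  unfold AngT.
  rewrite (ang_antisym (subq e q) (subq a q)), (ang_antisym (subq e q) (subq b q)),
    (ang_antisym (subq e q) (subq c q)). ring.
Qed.

Lemma zD_self1 a c : zD a a c = 0%Z. Proof. unfold zD; ring. Qed.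
Lemma zD_self2 a b : zD a b b = 0%Z. Proof. unfold zD; ring. Qed.
Lemma zD_self3 a b : zD a b a = 0%Z. Proof. unfold zD; ring. Qed.

Lemma tri_unimod M a b c : (0 <= M)%Z -> inbox M a -> inbox M b -> inbox M c -> zD a b c = 1%Z ->
  sumR (map (AngT a b c) (Box M)) = / 2.
Proof.
  intros hM ha hb hc hD.
  set (P := fun q => (ipt_eqb q a || ipt_eqb q b || ipt_eqb q c)%bool).
  assert (nab : a <> b) by (intro e; subst; rewrite zD_self1 in hD; discriminate).
  assert (nbc : b <> c) by (intro e; subst; rewrite zD_self2 in hD; discriminate).
  assert (nac : a <> c) by (intro e; subst; rewrite zD_self3 in hD; discriminate).
  rewrite (sumR_filter _ P).
  2:{ intros q _ hq. unfold P in hq. apply Bool.orb_false_iff in hq as [hq h3].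
      apply Bool.orb_false_iff in hq as [h1 h2].
      apply AngT_unimod_out; auto; intro e; subst q.
      - rewrite (proj2 (ipt_eqb_spec a a)) in h1 by auto. discriminate.
      - rewrite (proj2 (ipt_eqb_spec b b)) in h2 by auto. discriminate.
      - rewrite (proj2 (ipt_eqb_spec c c)) in h3 by auto. discriminate. }
  assert (Hp : Permutation (filter P (Box M)) (a :: b :: c :: nil)).
  { apply NoDup_Permutation.
    - apply NoDup_filter. apply NoDup_Box.
    - constructor; [simpl; intuition|]. constructor; [simpl; intuition|]. constructor; [simpl; auto|constructor].
    - intros q. rewrite filter_In, In_Box by auto. unfold P. simpl.
      rewrite !Bool.orb_true_iff, !ipt_eqb_spec. split.
      + intros [_ [[h|h]|h]].
        * left; symmetry; exact h.
        * right; left; symmetry; exact h.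
        * right; right; left; symmetry; exact h.
      + intros [h|[h|[h|[]]]]; subst q.
        * split; [exact ha| left; left; reflexivity].
        * split; [exact hb| left; right; reflexivity].
        * split; [exact hc| right; reflexivity]. }
  rewrite (sumR_perm _ _ (Permutation_map _ Hp)).
  unfold sumR; simpl. pose proof (AngT_vertices a b c ltac:(lia)). unfold sumR in H. lra.
Qed.

Lemma tri_nonneg M : (0 <= M)%Z -> forall n a b c, (Z.to_nat (zD a b c) <= n)%nat -> (0 <= zD a b c)%Z ->
  inbox M a -> inbox M b -> inbox M c ->
  sumR (map (AngT a b c) (Box M)) = IZR (zD a b c) / 2.
Proof.
  intros hM n. induction n; intros a b c hn h0 ha hb hc.
  - assert (zD a b c = 0%Z) by lia. rewrite H.
    rewrite sumR_map_zero; [lra|]. intros; apply AngT_degen; auto.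
  - destruct (Z.eq_dec (zD a b c) 0) as [e|e].
    { rewrite e. rewrite sumR_map_zero; [lra|]. intros; apply AngT_degen; auto. }
    destruct (Z.eq_dec (zD a b c) 1) as [e1|e1].
    { rewrite e1. rewrite tri_unimod; auto. lra. }
    destruct (find_e a b c ltac:(lia)) as [x [h1 [h2 h3]]].
    assert (hx : inbox M x) by (apply (e_inbox M a b c x); auto; lia).
    rewrite (sumR_map_ext _ (fun q => AngT x a b q + AngT x b c q + AngT x c a q)) by (intros; apply AngT_split).
    rewrite !sumR_map_plus.
    rewrite (IHn x a b), (IHn x b c), (IHn x c a).
    all: try assumption.
    1:{ rewrite <- (zD_sum x a b c). rewrite !plus_IZR. lra. }
    all: lia.
Qed.

Theorem tri M a b c : (0 <= M)%Z -> inbox M a -> inbox M b -> inbox M c ->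
  sumR (map (AngT a b c) (Box M)) = IZR (zD a b c) / 2.
Proof.
  intros hM ha hb hc.
  destruct (Z_le_gt_dec 0 (zD a b c)).
  - apply (tri_nonneg M hM (Z.to_nat (zD a b c))); auto.
  - rewrite (sumR_map_ext _ (fun q => - AngT a c b q)) by (intros; rewrite AngT_swap; ring).
    rewrite sumR_map_opp.
    rewrite (tri_nonneg M hM (Z.to_nat (zD a c b))); auto; rewrite (zD_swap a b c); try lia.
    rewrite opp_IZR. lra.
Qed.

Lemma Ang_shift_tri (p : nat -> ipt) n q : p n = p 0%nat ->
  Ang_shift p n q = sumR (map (fun i => AngT (p 0%nat) (p (i-1)%nat) (p i) q) (seq 1 n)).
Proof.
  intros hp.
  set (g := fun j => ang (subq (p 0%nat) q) (subq (p j) q)).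
  rewrite (sumR_map_ext _ (fun i => ang (subq (p (i-1)%nat) q) (subq (p i) q) + (g (i-1)%nat - g i))).
  2:{ intros i _. unfold AngT, g. rewrite (ang_antisym (subq (p 0%nat) q) (subq (p i) q)). ring. }
  rewrite sumR_map_plus, sumR_telescope. unfold g. rewrite hp. unfold Ang_shift. ring.
Qed.

Lemma area_tri a b c : IZR (zD a b c) / 2 = area (toR a) (toR b) + area (toR b) (toR c) + area (toR c) (toR a).
Proof. unfold zD, area, toR; simpl. izr. field. Qed.

Lemma Area_tri (p : nat -> ipt) n : p n = p 0%nat ->
  Area p n = sumR (map (fun i => IZR (zD (p 0%nat) (p (i-1)%nat) (p i)) / 2) (seq 1 n)).
Proof.
  intros hp.
  set (h := fun j => area (toR (p 0%nat)) (toR (p j))).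
  rewrite (sumR_map_ext _ (fun i => area (toR (p (i-1)%nat)) (toR (p i)) + (h (i-1)%nat - h i))).
  2:{ intros i _. rewrite area_tri. unfold h, area. ring. }
  rewrite sumR_map_plus, sumR_telescope. unfold h. rewrite hp. unfold Area. ring.
Qed.

Lemma fold_max_ge x l : In x l -> (x <= fold_right Z.max 0 l)%Z.
Proof. induction l; simpl; [tauto|]. intros [e|h]; [subst; lia|]. specialize (IHl h). lia. Qed.

Lemma fold_max_nn l : (0 <= fold_right Z.max 0 l)%Z.
Proof. induction l; simpl; lia. Qed.

Theorem lemma2p5 (n : nat) (p : nat -> ipt) :
  (1 <= n)%nat -> p n = p 0%nat ->
  exists s : list ipt,
    NoDup s /\
    (forall q : ipt, ~ In q s -> Ang_shift p n q = 0) /\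
    Area p n = sumR (map (Ang_shift p n) s).
Proof.
  intros hn hp.
  set (M := fold_right Z.max 0%Z (map (fun i => Z.max (Z.abs (fst (p i))) (Z.abs (snd (p i)))) (seq 0 (S n)))).
  assert (hM : (0 <= M)%Z) by apply fold_max_nn.
  assert (hin : forall i, (i <= n)%nat -> inbox M (p i)).
  { intros i hi.
    assert (Z.max (Z.abs (fst (p i))) (Z.abs (snd (p i))) <= M)%Z.
    { apply fold_max_ge. apply in_map_iff. exists i. split; auto. apply in_seq. lia. }
    unfold inbox. lia. }
  exists (Box M). split; [apply NoDup_Box|]. split.
  - intros q hq. rewrite (Ang_shift_tri p n q hp).
    apply sumR_map_zero. intros i hi. apply in_seq in hi.
    assert (h0 := hin 0%nat ltac:(lia)). assert (h1 := hin (i-1)%nat ltac:(lia)). assert (h2 := hin i ltac:(lia)).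
    rewrite In_Box in hq by auto. unfold inbox in *.
    destruct (Z_lt_le_dec M (fst q)).
    { apply (AngT_hp _ _ _ _ (-1) 0); lia. }
    destruct (Z_lt_le_dec (fst q) (- M)).
    { apply (AngT_hp _ _ _ _ 1 0); lia. }
    destruct (Z_lt_le_dec M (snd q)).
    { apply (AngT_hp _ _ _ _ 0 (-1)); lia. }
    destruct (Z_lt_le_dec (snd q) (- M)).
    { apply (AngT_hp _ _ _ _ 0 1); lia. }
    exfalso. apply hq. lia.
  - rewrite (sumR_map_ext _ (fun q => sumR (map (fun i => AngT (p 0%nat) (p (i-1)%nat) (p i) q) (seq 1 n))))
      by (intros; apply Ang_shift_tri; auto).
    rewrite (sumR_swap (fun q i => AngT (p 0%nat) (p (i-1)%nat) (p i) q)).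
    rewrite (Area_tri p n hp).
    apply sumR_map_ext. intros i hi. apply in_seq in hi.
    rewrite <- (tri M); [|auto|apply hin; lia|apply hin; lia|apply hin; lia].
    apply sumR_map_ext. auto.
Qed.
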